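(* Let $k\ge1$ with $2^k\le n+1$. Let $\mathbf{SB}_n^{2^k-1}$ be the set of all $f\in\mathbf{SB}_n$ with $\deg(f)\le 2^k-1$. Then $\mathbf{SB}_n^{2^k-1}$ equals the subring of $\mathbf{B}_n$ generated (together with the constants) by $\sigma_1,\sigma_2,\sigma_4,\dots,\sigma_{2^{k-1}}$, and the map $\tau:\mathbf{B}_k\to\mathbf{SB}_n^{2^k-1}$, $F(y_1,\dots,y_k)\mapsto F(\sigma_1,\sigma_2,\sigma_4,\dots,\sigma_{2^{k-1}})$ is a ring isomorphism.
   Context: $\mathbf{B}_n$ is the ring of Boolean functions $\mathbb{F}_2^n\to\mathbb{F}_2$ under pointwise addition and multiplication; $\mathbf{SB}_n$ is the subset of symmetric functions. $\sigma_i$ is the $i$-th elementary symmetric function of $x_1,\dots,x_n$ over $\mathbb{F}_2$. $\deg$ denotes algebraic degree (degree of the algebraic normal form). *)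

(* Defs.v *)
From HB Require Import structures.
From mathcomp Require Import all_boot all_order all_fingroup all_algebra.
Set Implicit Arguments. Unset Strict Implicit. Unset Printing Implicit Defensive.
Import GRing.Theory.
Local Open Scope ring_scope.

Definition vec (n : nat) := {ffun 'I_n -> 'F_2}.
Definition Bn (n : nat) := {ffun vec n -> 'F_2}.

(* coefficient of the monomial prod_{i in S} x_i in the algebraic normal form
   (Moebius transform) *)
Definition anf_coef (n : nat) (f : Bn n) (S : {set 'I_n}) : 'F_2 :=
  \sum_(x : vec n | [forall i, (x i != 0) ==> (i \in S)]) f x.

(* algebraic degree = max size of a monomial in the ANF (0 for f = 0) *)
Definition deg (n : nat) (f : Bn n) : nat :=
  (\max_(S : {set 'I_n} | anf_coef f S != 0%R) #|S|)%N.

Definition symmetric (n : nat) (f : Bn n) : Prop :=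
  forall (s : 'S_n) (x : vec n), f [ffun i => x (s i)] = f x.

Definition SBdeg (n d : nat) (f : Bn n) : Prop := symmetric f /\ (deg f <= d)%N.

Definition sigma (n i : nat) : Bn n :=
  [ffun x : vec n => \sum_(S : {set 'I_n} | #|S| == i) \prod_(j in S) x j].

Inductive in_subring (n : nat) (G : seq (Bn n)) : Bn n -> Prop :=
| sr_gen g : g \in G -> in_subring G g
| sr_zero : in_subring G 0
| sr_one : in_subring G 1
| sr_opp f : in_subring G f -> in_subring G (- f)
| sr_add f g : in_subring G f -> in_subring G g -> in_subring G (f + g)
| sr_mul f g : in_subring G f -> in_subring G g -> in_subring G (f * g).

Definition gens (n k : nat) : seq (Bn n) := [seq sigma n (2 ^ i) | i <- iota 0 k].

Definition tau (n k : nat) (F : Bn k) : Bn n :=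
  [ffun x : vec n => F [ffun i : 'I_k => sigma n (2 ^ i) x]].

(* Main.v *)
Require Import Defs.
From HB Require Import structures.
From mathcomp Require Import all_boot all_order all_fingroup all_algebra.
Set Implicit Arguments. Unset Strict Implicit. Unset Printing Implicit Defensive.
Import GRing.Theory.
Local Open Scope ring_scope.

Lemma F2_two : (2%:R : 'F_2) = 0.
Proof. by rewrite -(@Fp_nat_mod 2 erefl 2) modnn. Qed.

Lemma F2_natr m : (m%:R : 'F_2) = (odd m)%:R.
Proof. by rewrite -modn2 Fp_nat_mod. Qed.

Lemma F2_dec (a : 'F_2) : a = (a != 0)%:R.
Proof. by case: a => [[|[|]]] //=; move=> H; apply: val_inj. Qed.

Lemma F2_add_self (a : 'F_2) : a + a = 0.
Proof. by rewrite -mulr2n -mulr_natr F2_two mulr0. Qed.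

Lemma coef_binom (m i : nat) :
  ((('X + 1) ^+ m : {poly 'F_2})`_i) = ('C(m, i))%:R.
Proof.
elim: m i => [|m IH] i.
  by rewrite expr0 coef1 bin0n.
rewrite exprSr mulrDr mulr1 coefD coefMX.
case: i => [|i] /=; first by rewrite add0r IH !bin0.
by rewrite !IH binS natrD addrC.
Qed.

Lemma Xpow2 (j : nat) : (('X + 1) ^+ (2 ^ j) : {poly 'F_2}) = 'X^(2 ^ j) + 1.
Proof.
elim: j => [|j IH]; first by rewrite expn0 !expr1.
rewrite expnS mulnC !exprM IH sqrrD expr1n.
have -> : ('X^(2 ^ j) * 1 *+ 2 : {poly 'F_2}) = 0.
  by rewrite -mulr_natr -polyC_natr F2_two polyC0 mulr0.
by rewrite addr0.
Qed.

Lemma binS2 (m j i : nat) :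
  ('C(m + 2 ^ j, i))%:R =
  (if (i < 2 ^ j)%N then 0 else ('C(m, i - 2 ^ j))%:R) + ('C(m, i))%:R :> 'F_2.
Proof.
rewrite -!coef_binom exprD Xpow2 mulrDr mulr1 coefD coefMXn.
by case: ifP => _ //; rewrite coef_binom.
Qed.

Lemma binL (w j : nat) : ('C(w, 2 ^ j))%:R = (odd (w %/ 2 ^ j))%:R :> 'F_2.
Proof.
elim: w {-2}w (leqnn w) => [|N IH] w hw.
  by rewrite leqn0 in hw; rewrite (eqP hw) bin0n div0n expn_eq0.
case: (ltnP w (2 ^ j)) => h.
  by rewrite bin_small // divn_small.
have -> : w = ((w - 2 ^ j) + 2 ^ j)%N by rewrite subnK.
rewrite binS2 ltnn subnn bin0 IH; last first.
  rewrite leq_subLR; apply: leq_trans (_ : N.+1 <= _)%N => //.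
  by rewrite -addn1 addnC leq_add2r expn_gt0.
rewrite divnDr ?dvdnn // divnn expn_gt0 /= addn1 /=.
by case: (odd _) => /=; rewrite ?F2_add_self ?addr0.
Qed.

Definition chi n (A : {set 'I_n}) : vec n := [ffun i => (i \in A)%:R].
Definition supp n (x : vec n) : {set 'I_n} := [set i | x i != 0].

Lemma F2_one_neq0 : (1 : 'F_2) != 0.
Proof. exact: oner_neq0. Qed.

Lemma chiK n (A : {set 'I_n}) : supp (chi A) = A.
Proof.
apply/setP=> i; rewrite inE ffunE.
by case: (i \in A); rewrite ?eqxx ?oner_neq0.
Qed.

Lemma suppK n (x : vec n) : chi (supp x) = x.
Proof. by apply/ffunP=> i; rewrite ffunE inE -F2_dec. Qed.

Lemma prod_supp n (x : vec n) (S : {set 'I_n}) :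
  \prod_(j in S) x j = (S \subset supp x)%:R.
Proof.
case: (boolP (S \subset supp x)) => h.
  rewrite big1 // => j jS; have := subsetP h j jS; rewrite inE => hj.
  by rewrite (F2_dec (x j)) hj.
case/subsetPn: h => j jS; rewrite inE negbK => /eqP hj.
by rewrite (bigD1 j) //= hj mul0r.
Qed.

Lemma sum_cond_card (T : finType) (P Q : pred T) :
  \sum_(S | P S) ((Q S)%:R : 'F_2) = (#|[pred S | P S && Q S]|)%:R.
Proof.
rewrite -sumr_const big_mkcondr /=.
by apply: eq_bigr => S _; case: (Q S).
Qed.

Lemma sigmaE n m (x : vec n) : sigma n m x = ('C(#|supp x|, m))%:R.
Proof.
rewrite ffunE.
under eq_bigr => S _ do rewrite prod_supp.
rewrite sum_cond_card -cards_draws; congr (_%:R).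
by apply: eq_card => S; rewrite !inE andbC.
Qed.

Definition bits k (w : nat) : vec k := [ffun i : 'I_k => ((odd (w %/ 2 ^ i))%:R : 'F_2)].

Lemma tauE n k (F : Bn k) (x : vec n) : tau n F x = F (bits k #|supp x|).
Proof.
rewrite ffunE; congr (F _); apply/ffunP=> i.
by rewrite [LHS]ffunE sigmaE ffunE binL.
Qed.

Definition Tt (m : nat) (h : nat -> 'F_2) : 'F_2 :=
  \sum_(j < m.+1) ('C(m, j))%:R * h j.

Lemma Tt_pascal m h : Tt m.+1 h = Tt m h + Tt m (fun j => h j.+1).
Proof.
rewrite /Tt big_ord_recl /=.
under eq_bigr => i _ do rewrite /bump /= add1n binS natrD mulrDl.
rewrite big_split /= addrA; congr (_ + _).
rewrite [in RHS]big_ord_recl big_ord_recr /= (bin_small (ltnSn m)) mul0r addr0 !bin0.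
by [].
Qed.

Lemma Tt_add m g h : Tt m (fun j => g j + h j) = Tt m g + Tt m h.
Proof. by rewrite /Tt -big_split; apply: eq_bigr => j _; rewrite mulrDr. Qed.

Lemma Tt_periodic k (h : nat -> 'F_2) :
  (forall j, h (j + 2 ^ k)%N = h j) -> forall m, (2 ^ k <= m)%N -> Tt m h = 0.
Proof.
move=> hp m hm; rewrite -(subnK hm) addnC.
elim: (m - 2 ^ k)%N h hp => [|d IH] h hp; last first.
  by rewrite addnS Tt_pascal IH // IH ?addr0 // => j; rewrite -addSn hp.
rewrite addn0 /Tt.
have e (i : nat) : ('C(2 ^ k, i))%:R = (if (i < 2 ^ k)%N then 0 else ('C(0, i - 2 ^ k))%:R) + ('C(0, i))%:R :> 'F_2.
  by rewrite -binS2 add0n.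
under eq_bigr => i _ do rewrite e mulrDl.
rewrite big_split /= big_ord_recr /= [X in _ + X]big_ord_recl /=.
rewrite big1; last by move=> i _; rewrite /= ltn_ord mul0r.
rewrite [X in _ + (_ + X)]big1; last by move=> i _; rewrite bin0n /= mul0r.
rewrite ltnn subnn bin0 add0r addr0.
have := hp 0%N; rewrite add0n => ->.
by rewrite mul1r F2_add_self.
Qed.

Lemma Tt_tri N (d : nat -> 'F_2) :
  (forall m, (m <= N)%N -> Tt m d = 0) -> forall m, (m <= N)%N -> d m = 0.
Proof.
move=> hT m; elim: m {-2}m (leqnn m) => [|M IH] m hm hmN.
  move: (hT m hmN); rewrite leqn0 in hm; rewrite (eqP hm) /Tt big_ord_recl big_ord0.
  by rewrite bin0 mul1r addr0.
move: (hT m hmN); rewrite /Tt big_ord_recr /= binn mul1r big1 ?add0r //.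
move=> i _; rewrite IH ?mulr0 //; last by apply: leq_trans (ltnW (ltn_ord i)) hmN.
by rewrite -ltnS; apply: leq_trans hm.
Qed.

Lemma anf_sym n (f : Bn n) (g : nat -> 'F_2) (S : {set 'I_n}) :
  (forall A, f (chi A) = g #|A|) -> anf_coef f S = Tt #|S| g.
Proof.
move=> hf; rewrite /anf_coef.
have hb : bijective (@chi n) by exists (@supp n); [exact: chiK | exact: suppK].
rewrite (reindex (@chi n)); last exact: onW_bij.
have ce (A : {set 'I_n}) : [forall i, (chi A i != 0) ==> (i \in S)] = (A \subset S).
  apply/forallP/subsetP => [h i iA | h i].
    by have := h i; rewrite ffunE iA oner_neq0.
  by rewrite ffunE; case: (boolP (i \in A)) => [/h ->|]; rewrite ?implybT ?eqxx.
under eq_bigl => A do rewrite ce.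
under eq_bigr => A _ do rewrite hf.
rewrite (@partition_big _ _ _ _ _ _ _ (fun A : {set 'I_n} => (inord #|A| : 'I_#|S|.+1)) xpredT) //=.
apply: eq_bigr => j _.
rewrite (eq_bigr (fun _ => g j)); last first.
  move=> A /andP[sAS /eqP <-]; rewrite inordK //; rewrite ltnS; exact: subset_leq_card.
rewrite sumr_const mulr_natl; congr (_ *+ _).
rewrite -cards_draws; apply: eq_card => A; rewrite unfold_in !inE /=.
case: (boolP (A \subset S)) => //= sAS.
rewrite -(inj_eq val_inj) /= inordK // ltnS; exact: subset_leq_card.
Qed.

Lemma deg_le n (f : Bn n) d :
  (deg f <= d)%N <-> (forall S : {set 'I_n}, (d < #|S|)%N -> anf_coef f S = 0).
Proof.
rewrite /deg; split.
  move/bigmax_leqP => h S hS; apply/eqP; apply: contraT => /h.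
  by rewrite leqNgt hS.
move=> h; apply/bigmax_leqP => S hS; rewrite leqNgt; apply/negP => /h.
by move/eqP; rewrite (negbTE hS).
Qed.

Lemma F2_odd_inj (a b : bool) : (a%:R : 'F_2) = b%:R -> a = b.
Proof.
by case: a; case: b => //= /eqP; rewrite ?oner_eq0 // eq_sym oner_eq0.
Qed.

Lemma bits_inj_nat k : forall w w', (w < 2 ^ k)%N -> (w' < 2 ^ k)%N ->
  (forall i, (i < k)%N -> odd (w %/ 2 ^ i) = odd (w' %/ 2 ^ i)) -> w = w'.
Proof.
elim: k => [|k IH] w w' hw hw' h.
  by move: hw hw'; rewrite expn0 !ltnS !leqn0 => /eqP -> /eqP ->.
have h0 := h 0%N isT; rewrite expn0 !divn1 in h0.
have e : w./2 = w'./2.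
  apply: IH.
  - by rewrite -divn2 ltn_divLR // -expnSr.
  - by rewrite -divn2 ltn_divLR // -expnSr.
  move=> i hi; rewrite -!divn2 -!divnMA -expnS; exact: h.
by rewrite -(odd_double_half w) -(odd_double_half w') h0 e.
Qed.

Lemma bits_inj k w w' : (w < 2 ^ k)%N -> (w' < 2 ^ k)%N -> bits k w = bits k w' -> w = w'.
Proof.
move=> hw hw' /ffunP h; apply: bits_inj_nat hw hw' _ => i hi.
by have := h (Ordinal hi); rewrite !ffunE => /F2_odd_inj.
Qed.

Lemma bits_mod k w : bits k (w %% 2 ^ k) = bits k w.
Proof.
apply/ffunP=> i; rewrite !ffunE; congr (_%:R).
move: (ltn_ord i); move: (nat_of_ord i) => {}i hi'.
rewrite {2}(divn_eq w (2 ^ k)).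
have hi : (i <= k)%N by apply: ltnW.
rewrite -(subnK hi) expnD mulnA divnMDl ?expn_gt0 // oddD oddM oddX.
by rewrite subn_eq0 leqNgt hi' /= andbF.
Qed.

Lemma bits_periodic k F j : F (bits k (j + 2 ^ k)%N) = F (bits k j) :> 'F_2.
Proof. by rewrite -bits_mod modnDr bits_mod. Qed.

Lemma bits_surj k (b : vec k) : exists w, (w < 2 ^ k)%N /\ bits k w = b.
Proof.
pose f (w : 'I_(2 ^ k)) := bits k w.
have fi : injective f by move=> u v /bits_inj h; apply: val_inj; apply: h.
have := @inj_card_onto _ _ f fi.
rewrite card_ffun card_Fp // !card_ord => /(_ (leqnn _) b) /codomP [w ->].
by exists w; split; [exact: ltn_ord|].
Qed.

Lemma set_of_size n m : (m <= n)%N -> exists A : {set 'I_n}, #|A| = m.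
Proof.
move=> h; have : (0 < #|[set A : {set 'I_n} | #|A| == m]|)%N.
  by rewrite card_draws card_ord bin_gt0.
by case/card_gt0P => A; rewrite inE => /eqP; exists A.
Qed.

Lemma supp_perm n (s : 'S_n) (x : vec n) :
  #|supp [ffun i => x (s i)]| = #|supp x|.
Proof.
rewrite -(card_preimset (supp x) (@perm_inj _ s)); apply: eq_card => i.
by rewrite !(inE, ffunE).
Qed.

Lemma sym_card n (f : Bn n) : Defs.symmetric f ->
  forall A B : {set 'I_n}, #|A| = #|B| -> f (chi A) = f (chi B).
Proof.
move=> hs A B; move: {2}#|A :\: B| (leqnn #|A :\: B|) => N.
elim: N A => [|N IH] A hN hAB.
  have : A \subset B by rewrite -setD_eq0 -cards_eq0 -leqn0.
  move=> sAB; suff -> : A = B by [].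
  by apply/eqP; rewrite eqEcard sAB hAB leqnn.
case: (boolP (A \subset B)) => [sAB|].
  suff -> : A = B by [].
  by apply/eqP; rewrite eqEcard sAB hAB leqnn.
case/subsetPn => a aA aB.
case: (boolP (B \subset A)) => [sBA|/subsetPn [b bB bA]].
  have /eqP eBA : B == A by rewrite eqEcard sBA hAB leqnn.
  by rewrite eBA aA in aB.
pose s := tperm a b.
pose A' := s @^-1: A.
have e : [ffun i => chi A (s i)] = chi A'.
  by apply/ffunP=> i; rewrite !ffunE inE.
rewrite -(hs s) e; apply: IH; last by rewrite card_preimset ?hAB //; exact: perm_inj.
rewrite -ltnS; apply: leq_trans hN; apply: proper_card; apply/properP; split.
  apply/subsetP=> i; rewrite !inE.
  case: (tpermP a b i) => [-> | -> | _ _] /andP[h1 h2].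
  - by rewrite h2 in bA.
  - by rewrite bB in h1.
  - by rewrite h1 h2.
by exists a; rewrite !inE ?aA ?aB // tpermL (negbTE bA) andbF.
Qed.

Lemma prod_ffunE n (I : Type) (r : seq I) (P : pred I) (G : I -> Bn n) x :
  (\prod_(i <- r | P i) G i) x = \prod_(i <- r | P i) G i x.
Proof. by elim/big_rec2: _ => // [|i _ y _ <-]; rewrite !ffunE. Qed.

Lemma F2_cases (a : 'F_2) : a = 0 \/ a = 1.
Proof. by rewrite (F2_dec a); case: (a != 0); [right|left]. Qed.

Lemma F2_dec1 (a : 'F_2) : a = (a == 1)%:R.
Proof.
by case: (F2_cases a) => ->; rewrite ?eqxx // eq_sym oner_eq0.
Qed.

Lemma in_subring_sum n G (I : Type) (r : seq I) (P : pred I) (H : I -> Bn n) :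
  (forall i, P i -> in_subring G (H i)) -> in_subring G (\sum_(i <- r | P i) H i).
Proof. move=> h; apply: big_ind => //; [exact: sr_zero | exact: sr_add]. Qed.

Lemma in_subring_prod n G (I : Type) (r : seq I) (P : pred I) (H : I -> Bn n) :
  (forall i, P i -> in_subring G (H i)) -> in_subring G (\prod_(i <- r | P i) H i).
Proof. move=> h; apply: big_ind => //; [exact: sr_one | exact: sr_mul]. Qed.

Lemma tau_subring n k (F : Bn k) : in_subring (gens n k) (tau n F).
Proof.
pose t (b : vec k) (i : 'I_k) : Bn n :=
  if b i == 0 then sigma n (2 ^ i) + 1 else sigma n (2 ^ i).
have gi (i : 'I_k) : in_subring (gens n k) (sigma n (2 ^ i)).
  by apply: sr_gen; apply: map_f; rewrite mem_iota add0n ltn_ord.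
suff -> : tau n F = \sum_(b | F b == 1) \prod_(i < k) t b i.
  apply: in_subring_sum => b _; apply: in_subring_prod => i _.
  rewrite /t; case: ifP => _; [apply: sr_add => //; exact: sr_one | exact: gi].
apply/ffunP => x; rewrite sum_ffunE.
set v := [ffun i : 'I_k => sigma n (2 ^ i) x].
have -> : tau n F x = F v by rewrite ffunE.
have tE b i : t b i x = (v i == b i)%:R.
  rewrite /t /v ffunE; case: ifP => [/eqP ->|/negbT hb].
    rewrite ffunE [(1 : Bn n) x]ffunE.
    case: (F2_cases (sigma n (2 ^ i) x)) => ->.
      by rewrite add0r eqxx.
    rewrite F2_add_self; apply: F2_dec.
  have hb1 : b i = 1 by case: (F2_cases (b i)) hb => -> //; rewrite eqxx.
  by rewrite hb1 -F2_dec1.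
have pE b : (\prod_(i < k) t b i) x = (v == b)%:R.
  rewrite prod_ffunE; under eq_bigr => i _ do rewrite tE.
  case: (boolP (v == b)) => [/eqP <-|].
    by rewrite big1 // => i _; rewrite eqxx.
  move=> hvb; have [i hi] : exists i, v i != b i.
    apply/existsP; apply: contraR hvb => /existsPn h.
    by apply/eqP/ffunP => i; apply/eqP; have := h i; rewrite negbK.
  by rewrite (bigD1 i) //= (negbTE hi) mul0r.
under eq_bigr => b _ do rewrite pE.
case: (boolP (F v == 1)) => hFv.
  rewrite (bigD1 v) //= eqxx big1 ?addr0 ?(eqP hFv) //.
  by move=> b /andP [_ hb]; rewrite eq_sym (negbTE hb).
rewrite big1; last by move=> b hb; case: eqP => // e; rewrite e hb in hFv.
by rewrite (F2_dec1 (F v)) (negbTE hFv).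
Qed.

Lemma tau_chi n k (F : Bn k) A : tau n F (chi A) = F (bits k #|A|).
Proof. by rewrite tauE chiK. Qed.

Lemma tau_SB n k (F : Bn k) : SBdeg (2 ^ k - 1) (tau n F).
Proof.
split.
  by move=> s x; rewrite !tauE supp_perm.
apply/deg_le => S hS.
rewrite (@anf_sym _ _ (fun j => F (bits k j))); last by move=> A; rewrite tau_chi.
apply: (Tt_periodic (k := k)); first by move=> j; rewrite bits_periodic.
by move: hS; rewrite subn1 prednK // expn_gt0.
Qed.

Lemma SB_tau n k (f : Bn n) : (2 ^ k <= n + 1)%N -> SBdeg (2 ^ k - 1) f ->
  exists F : Bn k, tau n F = f.
Proof.
move=> hkn [hs hd].
pose g j := f (chi (odflt set0 [pick A : {set 'I_n} | #|A| == j])).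
have hf A : f (chi A) = g #|A|.
  rewrite /g; case: pickP => [A' /eqP hA'|/(_ A)]; last by rewrite eqxx.
  by apply: sym_card => //; rewrite hA'.
have hT m : (m <= n)%N -> (2 ^ k <= m)%N -> Tt m g = 0.
  move=> hmn hkm; have [S hS] := set_of_size hmn.
  rewrite -hS -(anf_sym _ hf); move/deg_le: hd; apply.
  by rewrite hS subn1 prednK // expn_gt0.
pose h j := g (j %% 2 ^ k)%N.
have hgh m : (m <= n)%N -> g m = h m.
  have := @Tt_tri n (fun j => g j + h j).
  move=> H hm; suff : g m + h m = 0.
    by move=> e; rewrite -[h m]add0r -e -addrA F2_add_self addr0.
  apply: H hm => m' hm'; rewrite Tt_add.
  case: (ltnP m' (2 ^ k)) => hk.
    suff -> : Tt m' h = Tt m' g by rewrite F2_add_self.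
    apply: eq_bigr => j _; rewrite /h modn_small //.
    by apply: leq_ltn_trans hk; rewrite -ltnS; apply: ltn_ord.
  rewrite hT // (Tt_periodic (k := k)) ?addr0 // => j.
  by rewrite /h modnDr.
pose F := [ffun b : vec k => g (if [pick w : 'I_(2 ^ k) | bits k w == b] is Some w then val w else 0%N)].
exists F; apply/ffunP => x; rewrite tauE ffunE.
have wn : (#|supp x| <= n)%N by apply: leq_trans (max_card _) _; rewrite card_ord.
rewrite -{2}(suppK x) hf.
case: pickP => [w /eqP hw|hn].
  rewrite -(bits_mod k #|supp x|) in hw; have := bits_inj (ltn_ord w) _ hw.
  rewrite ltn_mod expn_gt0 => /(_ isT) ew.
  by rewrite (_ : val w = #|supp x| %% 2 ^ k)%N // (hgh _ wn).
have [w [hw1 hw2]] := bits_surj (bits k #|supp x|).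
by have := hn (Ordinal hw1); rewrite /= hw2 eqxx.
Qed.

Lemma tau_inj n k : (2 ^ k <= n + 1)%N -> injective (@tau n k).
Proof.
move=> hkn F G e; apply/ffunP => b.
have [w [hw <-]] := bits_surj b.
have wn : (w <= n)%N.
  by have := leq_trans hw hkn; rewrite addn1 ltnS.
have [A hA] := set_of_size wn.
by rewrite -hA -!tau_chi e.
Qed.

Theorem theorem2 (n k : nat) (hk : (1 <= k)%N) (hkn : (2 ^ k <= n + 1)%N) :
  (forall f : Bn n, SBdeg (2 ^ k - 1) f <-> in_subring (gens n k) f) /\
  (forall F : Bn k, SBdeg (2 ^ k - 1) (tau n F)) /\
  tau n (1 : Bn k) = 1 /\
  (forall F G : Bn k, tau n (F + G) = tau n F + tau n G) /\
  (forall F G : Bn k, tau n (F * G) = tau n F * tau n G) /\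
  injective (@tau n k) /\
  (forall f : Bn n, SBdeg (2 ^ k - 1) f -> exists F : Bn k, tau n F = f).
Proof.
have hadd (F G : Bn k) : tau n (F + G) = tau n F + tau n G.
  by apply/ffunP => x; rewrite !ffunE.
have hmul (F G : Bn k) : tau n (F * G) = tau n F * tau n G.
  by apply/ffunP => x; rewrite !ffunE.
have hone : tau n (1 : Bn k) = 1 by apply/ffunP => x; rewrite !ffunE.
split; last first.
  split; first exact: tau_SB.
  split; first exact: hone.
  split; first exact: hadd.
  split; first exact: hmul.
  split; first exact: tau_inj.
  by move=> f; apply: SB_tau.
move=> f; split.
  by move/(SB_tau hkn) => [F <-]; apply: tau_subring.
move=> hin; suff : exists F : Bn k, tau n F = f by case=> F <-; apply: tau_SB.
elim: hin => [g|||g _ [F <-]|g1 g2 _ [F1 <-] _ [F2 <-]|g1 g2 _ [F1 <-] _ [F2 <-]].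
- case/mapP => i; rewrite mem_iota add0n => hi ->.
  exists [ffun b : vec k => b (Ordinal hi)].
  by apply/ffunP => x; rewrite !ffunE.
- exists 0; by apply/ffunP => x; rewrite !ffunE.
- by exists 1.
- exists (- F); by apply/ffunP => x; rewrite !ffunE.
- by exists (F1 + F2).
- by exists (F1 * F2).
Qed.
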